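(* Let $\{a(n)\}_{n\in\mathbb{N}}$ be a sequence of non-negative numbers with $\sum_{n=1}^{\infty}a(n)\le 1$. Then for every $\alpha>1$ there exist $\varepsilon(\alpha)>0$ and $\nu(\alpha)\in\mathbb{N}$ such that for every integer $N\ge\nu(\alpha)$ there is a positive integer $\ell=\ell_{\alpha,N}<N^{\alpha}$ such that, with $B_{\alpha,N}:=\{\ell,2\ell,\ldots,N\ell\}$, one has $\sum_{\lambda,\mu\in B_{\alpha,N},\ \mu<\lambda}a(\lambda-\mu)<\frac{1}{N^{\varepsilon(\alpha)}}$. *)

(* Defs.v *)
From mathcomp Require Import all_boot all_order all_algebra.
From mathcomp Require Import reals exp.
Set Implicit Arguments. Unset Strict Implicit. Unset Printing Implicit Defensive.
Import Order.TTheory GRing.Theory Num.Theory.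
Local Open Scope ring_scope.

Definition Bset (l N : nat) : seq nat := [seq (k * l)%N | k <- iota 1 N].

Definition diffsum (R : realType) (a : nat -> R) (B : seq nat) : R :=
  \sum_(lam <- B) \sum_(mu <- B | (mu < lam)%N) a (lam - mu)%N.

(* Main.v *)
Require Import Defs.
From mathcomp Require Import all_boot all_order all_algebra.
From mathcomp Require Import reals exp.
From mathcomp Require Import zify ring lra.
Import Order.TTheory GRing.Theory Num.Theory.
Local Open Scope ring_scope.
Set Implicit Arguments. Unset Strict Implicit. Unset Printing Implicit Defensive.

Section NT.
Local Open Scope nat_scope.

Definition tau m := size (divisors m).

Lemma tau_mul a b : 0 < a -> 0 < b -> tau (a * b) <= tau a * tau b.
Proof.
move=> a0 b0; rewrite /tau -(size_allpairs muln).
apply: uniq_leq_size; first exact: divisors_uniq.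
move=> d; rewrite -dvdn_divisors ?muln_gt0 ?a0 // => dab.
set g := gcdn d a.
have g0 : 0 < g by rewrite gcdn_gt0 a0 orbT.
have gd : g %| d by apply: dvdn_gcdl.
have -> : d = g * (d %/ g) by rewrite mulnC divnK.
apply: allpairs_f; first by rewrite -dvdn_divisors // dvdn_gcdr.
rewrite -dvdn_divisors // -(dvdn_pmul2l g0) mulnC divnK //.
by rewrite /g muln_gcdl dvdn_gcd dvdn_mulr.
Qed.

Lemma tau_pfactor p e : prime p -> tau (p ^ e) <= e.+1.
Proof.
move=> pp; rewrite /tau.
have -> : e.+1 = size [seq p ^ j | j <- iota 0 e.+1] by rewrite size_map size_iota.
apply: uniq_leq_size; first exact: divisors_uniq.
move=> d; rewrite -dvdn_divisors ?expn_gt0 ?prime_gt0 //.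
case/(dvdn_pfactor _ _ pp) => j je ->.
by apply: map_f; rewrite mem_iota /= add0n ltnS.
Qed.

Lemma pow_bound k e : 0 < k -> e.+1 ^ k <= k ^ k * 2 ^ e.
Proof.
move=> k0; set q := e %/ k.
have h1 : e.+1 <= k * q.+1.
  by rewrite /q; have := ltn_ceil e k0; rewrite mulnC.
have h2 : q.+1 <= 2 ^ q by apply: ltn_expl.
have h3 : q * k <= e by rewrite /q leq_divM.
apply: (@leq_trans ((k * q.+1) ^ k)); first by rewrite leq_exp2r.
rewrite expnMn leq_mul2l; apply/orP; right.
apply: (@leq_trans ((2 ^ q) ^ k)); first by rewrite leq_exp2r.
by rewrite -expnM leq_pexp2l.
Qed.

Lemma count_lt (T : eqType) (a b : pred T) (s : seq T) x0 :
  (forall x, b x -> a x) -> x0 \in s -> a x0 -> ~~ b x0 -> count b s < count a s.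
Proof.
move=> sub; elim: s => [//|y s IH]; rewrite inE /= => /orP[/eqP <-|xs] ax bx.
  by rewrite ax (negbTE bx) add0n add1n ltnS; apply: sub_count.
rewrite -addnS; apply: leq_add; last exact: IH.
by case: (b y) (sub y) => // ->.
Qed.

Definition W k m := count (fun q => prime q && (q %| m)) (iota 0 (2 ^ k)).

Lemma tau1 : tau 1 = 1. Proof. by []. Qed.

Lemma tau_boundW k : 0 < k -> forall m, 0 < m -> tau m ^ k <= (k ^ k) ^ (W k m) * m.
Proof.
move=> k0 m; elim: m {-2}m (leqnn m) => [|n IH] m lem m0; first by case: m lem m0.
case: (ltnP 1 m) => m1; last first.
  have -> : m = 1 by apply/eqP; rewrite eqn_leq m1.
  by rewrite tau1 exp1n muln1 expn_gt0 expn_gt0 k0.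
set p := pdiv m; have pp : prime p by apply: pdiv_prime.
have pm : p \in primes m by rewrite mem_primes pp m0 pdiv_dvd.
case: (pfactor_coprime pp m0) => m' cop em.
set e := logn p m in em.
have e0 : 0 < e by rewrite /e logn_gt0.
have m'0 : 0 < m' by move: m0; rewrite em muln_gt0 => /andP[].
have pe2 : 1 < p ^ e.
  by rewrite -(exp1n e) ltn_exp2r // prime_gt1.
have m'm : m' < m by rewrite em -{1}(muln1 m') ltn_mul2l m'0.
have IHm' := IH m' (leq_trans m'm lem) m'0.
have tm : tau m <= tau m' * e.+1.
  rewrite em; apply: (leq_trans (tau_mul m'0 _)); first by rewrite expn_gt0 prime_gt0.
  by rewrite leq_mul2l tau_pfactor ?orbT.
have tmk : tau m ^ k <= (k ^ k) ^ (W k m') * m' * e.+1 ^ k.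
  apply: (@leq_trans ((tau m' * e.+1) ^ k)); first by rewrite leq_exp2r.
  by rewrite expnMn leq_mul2r IHm' orbT.
have kk0 : 0 < k ^ k by rewrite expn_gt0 k0.
have Wsub : forall q, prime q && (q %| m') -> prime q && (q %| m).
  by move=> q /andP[-> qm]; rewrite em dvdn_mulr.
apply: (leq_trans tmk); rewrite [X in _ <= _ * X]em.
case: (ltnP p (2 ^ k)) => pk.
  have Wlt : W k m' < W k m.
    apply: (count_lt (x0 := p)) => //.
    - by rewrite mem_iota add0n.
    - by rewrite pp pdiv_dvd.
    - by rewrite pp /= -prime_coprime.
  have eb : e.+1 ^ k <= k ^ k * p ^ e.
    apply: (leq_trans (pow_bound e k0)).
    rewrite leq_mul2l; apply/orP; right; rewrite leq_exp2r //.
    exact: prime_gt1.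
  apply: (@leq_trans ((k ^ k) ^ (W k m') * m' * (k ^ k * p ^ e))).
    by rewrite leq_mul2l eb orbT.
  have -> : (k ^ k) ^ W k m' * m' * (k ^ k * p ^ e) = (k ^ k) ^ (W k m').+1 * (m' * p ^ e).
    rewrite expnSr; set A := _ ^ W k m'; set B := k ^ k; set C := p ^ e; nia.
  rewrite leq_mul2r; apply/orP; right.
  exact: leq_pexp2l kk0 Wlt.
rewrite -mulnA; apply: leq_mul.
  by apply: leq_pexp2l => //; apply: sub_count.
apply: leq_mul => //.
apply: (@leq_trans ((2 ^ e) ^ k)); first by rewrite leq_exp2r // ltn_expl.
rewrite -expnM mulnC expnM leq_exp2r //.
Qed.

Lemma tau_bound k : 0 < k -> forall m, 0 < m -> tau m ^ k <= (k ^ k) ^ (2 ^ k) * m.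
Proof.
move=> k0 m m0; apply: (leq_trans (tau_boundW k0 m0)); rewrite leq_mul2r; apply/orP; right.
apply: leq_pexp2l; first by rewrite expn_gt0 k0.
by rewrite /W (leq_trans (count_size _ _)) // size_iota.
Qed.

End NT.

Section S.
Variable R : realType.

Lemma sum_ind (s : seq nat) x (F : nat -> R) : uniq s ->
  \sum_(m <- s) (m == x)%:R * F m = (x \in s)%:R * F x.
Proof.
elim: s => [|y s IH]; first by rewrite big_nil mul0r.
rewrite big_cons inE /= => /andP[ys us]; rewrite IH //.
case: (eqVneq y x) => [<-|yx]; first by rewrite (negbTE ys) /= mul0r addr0 mul1r.
by rewrite /= mul0r add0r.
Qed.

Lemma sum_count (s : seq nat) (P : pred nat) :
  \sum_(i <- s) (P i)%:R = (count P s)%:R :> R.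
Proof.
elim: s => [|y s IH]; first by rewrite big_nil.
by rewrite big_cons IH /= natrD.
Qed.

Lemma exists_small (s : seq nat) (F : nat -> R) : s != [::] ->
  exists2 x, x \in s & (size s)%:R * F x <= \sum_(i <- s) F i.
Proof.
elim: s => [//|y s IH] _.
case: (eqVneq s [::]) => [->|sn].
  by exists y; rewrite ?inE ?eqxx // big_cons big_nil addr0 mul1r.
have [x xs hx] := IH sn.
case: (lerP (F y) (F x)) => hyx.
  exists y; first by rewrite inE eqxx.
  rewrite big_cons /= -addn1 natrD mulrDl mul1r addrC lerD2l.
  apply: le_trans hx; rewrite ler_wpM2l //.
exists x; first by rewrite inE xs orbT.
rewrite big_cons /= -addn1 natrD mulrDl mul1r addrC.
by apply: lerD => //; apply: ltW.
Qed.


Lemma eq_mul_div m d l : (0 < l)%N -> (m == d * l)%N = (l %| m)%N && (d == m %/ l)%N.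
Proof.
move=> l0; apply/eqP/andP => [->|[lm /eqP ->]]; last by rewrite divnK.
by rewrite dvdn_mull // mulnK.
Qed.

Lemma inner_le m N L : (0 < m)%N ->
  \sum_(1 <= l < L.+1) \sum_(1 <= d < N) ((m == d * l)%:R : R) <= (tau m)%:R.
Proof.
move=> m0.
apply: (@le_trans _ _ (\sum_(1 <= l < L.+1) ((l %| m)%N)%:R)).
  rewrite big_nat [X in _ <= X]big_nat; apply: ler_sum => l /andP[l1 _].
  under eq_bigr => d _ do rewrite eq_mul_div // -mulnb natrM.
  rewrite -mulr_sumr -[X in _ <= X]mulr1 ler_wpM2l //.
  under eq_bigr => d _ do rewrite -[_%:R]mulr1.
  rewrite sum_ind; last by rewrite /index_iota iota_uniq.
  by rewrite mulr1; case: (_ \in _).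
rewrite sum_count ler_nat /tau -size_filter.
apply: uniq_leq_size; first by rewrite filter_uniq // iota_uniq.
by move=> l; rewrite mem_filter -dvdn_divisors // => /andP[].
Qed.

Lemma sumF_le (a : nat -> R) (a_ge0 : forall n, 0 <= a n)
  (a_sum : forall M : nat, \sum_(1 <= n < M.+1) a n <= 1) N L T :
  (forall m, (0 < m)%N -> (m < N * L)%N -> (tau m)%:R <= T) -> 0 <= T ->
  \sum_(1 <= l < L.+1) \sum_(1 <= d < N) a (d * l) <= T.
Proof.
move=> hT T0.
have e1 : forall l d, (1 <= l < L.+1)%N -> (1 <= d < N)%N ->
    a (d * l) = \sum_(1 <= m < N * L) (m == d * l)%:R * a m.
  move=> l d /andP[l1 lL] /andP[d1 dN].
  rewrite sum_ind; last by rewrite /index_iota iota_uniq.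
  rewrite mem_index_iota; suff -> : (1 <= d * l < N * L)%N by rewrite mul1r.
  apply/andP; split; nia.
have E : \sum_(1 <= l < L.+1) \sum_(1 <= d < N) a (d * l) =
    \sum_(1 <= l < L.+1) \sum_(1 <= d < N) \sum_(1 <= m < N * L) (m == d * l)%:R * a m.
  rewrite big_nat [RHS]big_nat; apply: eq_bigr => l hl.
  rewrite big_nat [RHS]big_nat; apply: eq_bigr => d hd; exact: e1.
rewrite E.
under eq_bigr => l _ do rewrite exchange_big /=.
rewrite exchange_big /=.
apply: (@le_trans _ _ (\sum_(1 <= m < N * L) T * a m)).
  rewrite big_nat [X in _ <= X]big_nat; apply: ler_sum => m /andP[m1 mNL].
  have -> : \sum_(1 <= i < L.+1) \sum_(1 <= i0 < N) (m == i0 * i)%:R * a m =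
      (\sum_(1 <= i < L.+1) \sum_(1 <= i0 < N) ((m == i0 * i)%:R : R)) * a m.
    rewrite mulr_suml; apply: eq_bigr => l _; by rewrite mulr_suml.
  apply: ler_wpM2r => //; apply: le_trans (inner_le _ _ m1) (hT m m1 mNL).
rewrite -mulr_sumr -[X in _ <= X]mulr1 ler_wpM2l //.
case: (N * L)%N => [|M]; first by rewrite big_geq.
exact: a_sum.
Qed.

Lemma diffsum_le (a : nat -> R) (a_ge0 : forall n, 0 <= a n) l N : (0 < l)%N ->
  diffsum a (Bset l N) <= N%:R * \sum_(1 <= d < N) a (d * l).
Proof.
move=> l0; rewrite /diffsum /Bset big_map.
have -> : N%:R * \sum_(1 <= d < N) a (d * l) =
    \sum_(k <- iota 1 N) \sum_(1 <= d < N) a (d * l).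
  by rewrite big_const_seq count_predT size_iota -Monoid.iteropE /= mulr_natl.
rewrite big_seq [X in _ <= X]big_seq; apply: ler_sum => k; rewrite mem_iota => /andP[k1 kN].
rewrite big_map /=.
have -> : \sum_(j <- iota 1 N | (j * l < k * l)%N) a (k * l - j * l)%N =
    \sum_(1 <= j < N.+1 | (j < k)%N) a ((k - j) * l)%N.
  rewrite /index_iota subSS subn0; apply: eq_big => j; first by rewrite ltn_pmul2r.
  by rewrite mulnBl.
have kN' : (k <= N.+1)%N by apply: ltnW.
have -> : \sum_(1 <= j < N.+1 | (j < k)%N) a ((k - j) * l)%N =
    \sum_(1 <= j < k) a ((k - j) * l)%N.
  by rewrite (big_nat_widen _ _ _ _ _ kN').
rewrite big_nat_rev /=.
have -> : \sum_(1 <= i < k) a ((k - (1 + k - i.+1)) * l)%N = \sum_(1 <= i < k) a (i * l).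
  rewrite big_nat [RHS]big_nat; apply: eq_bigr => i /andP[i1 ik].
  by congr (a (_ * l)); lia.
have kN2 : (k <= N)%N by rewrite -ltnS -(add1n N).
rewrite (big_cat_nat k1 kN2) //= lerDl sumr_ge0 //.
Qed.
End S.
Section F.
Variable R : realType.

Lemma final_bound (alpha : R) (k : nat) (C Nr Lr : R) :
  1 < alpha -> (0 < k)%N -> (1 + alpha) / k%:R <= (alpha - 1) / 2 ->
  0 <= C -> 1 <= Nr -> Nr `^ alpha / 4 <= Lr -> Lr <= Nr `^ alpha ->
  4 * C `^ (k%:R^-1) < Nr `^ ((alpha - 1) / 8) ->
  Nr * (C * (Nr * Lr)) `^ (k%:R^-1) / Lr < (Nr `^ ((alpha - 1) / 8))^-1.
Proof.
move=> a1 k0 hk C0 N1 hL1 hL2 hN.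
set e := (alpha - 1) / 8 in hN *; set q := k%:R^-1 in hN hk *; set X := Nr `^ alpha in hL1 hL2 *.
have N0 : 0 < Nr by lra.
have Nn0 : Nr != 0 by rewrite gt_eqF.
have X1 : 1 <= X by apply: (le_trans N1); apply: le1r_powR => //; apply: ltW.
have Lr0 : 0 < Lr by lra.
have B0 : 0 < Nr `^ e by apply: powR_gt0.
have q0 : 0 <= q by rewrite /q invr_ge0 ler0n.
rewrite -(ltr_pM2r B0) mulVf ?gt_eqF // mulrAC ltr_pdivrMr // mul1r.
have pD : forall r s, Nr `^ (r + s) = Nr `^ r * Nr `^ s.
  by move=> r s; rewrite powRD // Nn0 implybT.
have h1 : (C * (Nr * Lr)) `^ q <= C `^ q * (Nr `^ q * X `^ q).
  rewrite powRM ?mulr_ge0 ?(ltW N0) ?(ltW Lr0) // ler_wpM2l ?powR_ge0 //.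
  rewrite powRM ?(ltW N0) ?(ltW Lr0) // ler_wpM2l ?powR_ge0 //.
  by apply: ge0_ler_powR => //; rewrite nnegrE ?(ltW Lr0) ?powR_ge0.
have hX : X `^ q = Nr `^ (alpha * q) by rewrite powRrM.
have hexp : 1 + q + alpha * q + e + e <= alpha.
  have : (1 + alpha) * q <= (alpha - 1) / 2 by [].
  rewrite /e; lra.
have h : Nr * (C * (Nr * Lr)) `^ q * Nr `^ e <= Nr * (C `^ q * (Nr `^ q * X `^ q)) * Nr `^ e.
  by rewrite ler_wpM2r ?(ltW B0) // ler_wpM2l // ltW.
apply: (le_lt_trans h).
have -> : Nr * (C `^ q * (Nr `^ q * X `^ q)) * Nr `^ e = C `^ q * Nr `^ (1 + q + alpha * q + e).
  by rewrite !pD powRr1 ?(ltW N0) // -hX; ring.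
set Y := Nr `^ (1 + q + alpha * q + e).
have Y0 : 0 < Y by apply: powR_gt0.
apply: (@lt_le_trans _ _ (Nr `^ e * Y / 4)).
  have : 4 * C `^ q * Y < Nr `^ e * Y by rewrite ltr_pM2r.
  move=> hh; rewrite ltr_pdivlMr //; apply: le_lt_trans hh; rewrite le_eqVlt; apply/orP; left; apply/eqP; ring.
apply: le_trans hL1; rewrite ler_pM2r ?invr_gt0 // /Y -pD /X.
apply: (ler_powR N1); rewrite addrC; exact: hexp.
Qed.

End F.

Lemma tauR (R : realType) k m : (0 < k)%N -> (0 < m)%N ->
  (tau m)%:R <= (((k ^ k) ^ (2 ^ k))%N%:R * m%:R) `^ (k%:R^-1) :> R.
Proof.
move=> k0 m0.
have kn0 : (k%:R : R) != 0 by rewrite pnatr_eq0 -lt0n.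
have E : (tau m)%:R = (((tau m)%:R `^ k%:R) `^ (k%:R^-1) : R).
  by rewrite -powRrM mulfV // powRr1.
rewrite [X in X <= _]E.
apply: ge0_ler_powR.
- by rewrite invr_ge0.
- by rewrite nnegrE powR_ge0.
- by rewrite nnegrE mulr_ge0.
by rewrite powR_mulrn // -natrX -natrM ler_nat tau_bound.
Qed.

Unset Implicit Arguments.
Theorem corollary10 (R : realType) (a : nat -> R)
  (a_ge0 : forall n, 0 <= a n)
  (a_sum : forall M : nat, \sum_(1 <= n < M.+1) a n <= 1) :
  forall alpha : R, 1 < alpha ->
  exists (eps : R) (nu : nat), 0 < eps /\
    forall N : nat, (nu <= N)%N ->
      exists l : nat, (0 < l)%N /\ (l%:R < powR (N%:R) alpha) /\
        diffsum a (Bset l N) < (powR (N%:R) eps)^-1.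
Proof.
move=> alpha a1.
set e := (alpha - 1) / 8.
set k := (Num.truncn (2 * (1 + alpha) / (alpha - 1))).+1.
set C := ((k ^ k) ^ (2 ^ k))%N.
set q := (k%:R : R)^-1.
set D := 4 * (C%:R : R) `^ q.
have e0 : 0 < e by rewrite /e; lra.
have k0 : (0 < k)%N by [].
have kr0 : (0 : R) < k%:R by rewrite ltr0n.
have D0 : 0 <= D by rewrite /D mulr_ge0 ?powR_ge0.
have hk : (1 + alpha) / k%:R <= (alpha - 1) / 2.
  have kb : 2 * (1 + alpha) / (alpha - 1) < k%:R.
    rewrite /k; apply: truncnS_gt.
  rewrite ltr_pdivrMr in kb; last by lra.
  rewrite ler_pdivrMr //; nra.
exists e, (maxn 4 (Num.truncn (D `^ (e^-1))).+1); split => // N.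
rewrite geq_max => /andP[N4 ND].
set Nr := (N%:R : R).
have N4r : 4 <= Nr by rewrite /Nr (ler_nat R 4 N).
have N1 : 1 <= Nr by lra.
have hNe : D < Nr `^ e.
  have -> : D = (D `^ (e^-1)) `^ e by rewrite -powRrM mulVf ?gt_eqF // powRr1.
  apply: gt0_ltr_powR; rewrite ?nnegrE ?powR_ge0 ?(le_trans _ N1) //.
  apply: (lt_le_trans (truncnS_gt _)); rewrite /Nr ler_nat //.
set X := Nr `^ alpha.
have XN : Nr <= X by apply: le1r_powR => //; apply: ltW.
set L := Num.truncn (X / 2).
have [hL1 hL2] : L%:R <= X / 2 /\ X / 2 < L%:R + 1 :> R.
  have X0 : 0 <= X / 2 by lra.
  by have /andP[h1 h2] := truncn_itv X0; rewrite natr1; split => //; lra.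
have L1 : (1 < L)%N by rewrite -(ltr1n R); lra.
have L0 : (0 < L)%N by apply: ltn_trans L1.
set T := ((C%:R : R) * (N * L)%N%:R) `^ q.
have hT : forall m, (0 < m)%N -> (m < N * L)%N -> (tau m)%:R <= T.
  move=> m m0 mNL; apply: (le_trans (tauR R k0 m0)); rewrite /T.
  apply: ge0_ler_powR; rewrite ?invr_ge0 ?ler0n ?nnegrE ?mulr_ge0 ?ler0n //.
  by rewrite ler_wpM2l // ler_nat ltnW.
have T0 : 0 <= T by apply: powR_ge0.
have hS := sumF_le a_ge0 a_sum hT T0.
rewrite /index_iota subSS subn0 in hS.
have Lne : iota 1 L != [::] by move: L0; case: (L).
have [l lL hl] := exists_small (fun l => \sum_(1 <= d < N) a (d * l)) Lne.
move: lL; rewrite mem_iota add1n ltnS => /andP[l0 lLe].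
exists l; split => //; split.
  apply: (@le_lt_trans _ _ (L%:R)); first by rewrite ler_nat.
  lra.
rewrite size_iota in hl.
apply: (le_lt_trans (diffsum_le a_ge0 N l0)).
have Lr0 : (0 : R) < L%:R by rewrite ltr0n.
apply: (@le_lt_trans _ _ (Nr * T / L%:R)).
  rewrite -mulrA ler_wpM2l ?ler0n // ler_pdivlMr // mulrC.
  exact: le_trans hl hS.
rewrite /T natrM.
apply: final_bound => //; rewrite -/X; lra.
Qed.
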